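(* For every integer $D\ge 1$ there exists $n_0$ such that for all $n\ge n_0$ the following holds. If $\Gamma$ is a graph that contains as a subgraph every $D$-degenerate graph on $n$ vertices with maximum degree at most $2D+1$, then \[e(\Gamma)\ge \tfrac{1}{1000D}\,n^{2-1/D}.\]
   Context: A graph $H$ is $D$-degenerate if every induced subgraph of $H$ has a vertex of degree at most $D$; equivalently, there is an ordering $v_1,\dots,v_n$ of $V(H)$ such that each $v_i$ has at most $D$ neighbours among $v_1,\dots,v_{i-1}$. $e(\Gamma)$ denotes the number of edges of $\Gamma$. *)

(* Defs.v *)
From mathcomp Require Import all_boot.
From Stdlib Require Import Reals.
Set Implicit Arguments. Unset Strict Implicit. Unset Printing Implicit Defensive.

Definition simple_graph (T : finType) (g : rel T) : Prop :=
  (forall x, ~~ g x x) /\ (forall x y, g x y = g y x).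

Definition num_edges (T : finType) (g : rel T) : nat :=
  #|[set E : {set T} | [exists x, exists y, (E == [set x; y]) && g x y]]|.

Definition degenerate (T : finType) (g : rel T) (D : nat) : Prop :=
  forall S : {set T}, S != set0 ->
    exists2 v, v \in S & #|[set u in S | g v u]| <= D.

Definition max_deg_le (T : finType) (g : rel T) (d : nat) : Prop :=
  forall v, #|[set u | g v u]| <= d.

Definition contains_subgraph (T U : finType) (g : rel T) (h : rel U) : Prop :=
  exists f : U -> T, injective f /\ forall x y, h x y -> g (f x) (f y).

(* Main.v *)
Require Import Defs.
From mathcomp Require Import all_boot.
From Stdlib Require Import Reals.
From mathcomp Require Import zify.
From Stdlib Require Import Lra.
From mathcomp Require Import ssrnat.
Set Implicit Arguments. Unset Strict Implicit. Unset Printing Implicit Defensive.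

Lemma exp_pow_n (x : R) (k : nat) : (exp x ^ k = exp (INR k * x))%R.
Proof.
elim: k => [|k IH]; first by rewrite /= Rmult_0_l exp_0.
change (exp x * exp x ^ k = exp (INR k.+1 * x))%R; rewrite IH S_INR -exp_plus; f_equal; lra.
Qed.

Lemma INR_muln (a b : nat) : INR (a * b) = (INR a * INR b)%R.
Proof. by rewrite mulnE mult_INR. Qed.

Lemma INR_expn (a b : nat) : INR (a ^ b) = (INR a ^ b)%R.
Proof.
elim: b => [|b IH]; first by [].
by rewrite expnS INR_muln IH.
Qed.

Lemma succ_pow_le (a : nat) : (a.+1 ^ a <= 3 * a ^ a)%N.
Proof.
case: a => [|a]; first by [].
apply/leP; apply: INR_le.
rewrite INR_muln !INR_expn.
have Ha : (0 < INR a.+1)%R by apply: lt_0_INR; apply/ltP.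
have H1 : (INR a.+2 = INR a.+1 * (1 + / INR a.+1))%R.
  rewrite (S_INR a.+1); field; lra.
rewrite H1 Rpow_mult_distr.
set x := INR a.+1 in Ha H1 *.
replace (INR 3) with 3%R by (simpl; lra).
rewrite Rmult_comm.
apply: Rmult_le_compat_r; first by apply: pow_le; lra.
apply: Rle_trans (_ : exp (/ x) ^ a.+1 <= _)%R.
  apply: pow_incr; split; [|apply: exp_ineq1_le].
  have : (0 < / x)%R by apply: Rinv_0_lt_compat. lra.
rewrite exp_pow_n /x Rinv_r; last by apply: not_0_INR.
exact: exp_le_3.
Qed.

Lemma fact_lb (a : nat) : (a ^ a <= 3 ^ a * a`!)%N.
Proof.
elim: a => [|a IH] //.
rewrite factS expnS.
apply: (@leq_trans (a.+1 * (3 * a ^ a))).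
  by rewrite leq_mul2l succ_pow_le orbT.
rewrite expnS.
move: IH; set X := a ^ a; set Y := 3 ^ a; set Z := a`!; nia.
Qed.

Lemma pow_lt_R (a b : R) (k : nat) : (0 <= a)%R -> (a < b)%R -> (0 < k)%N -> (a ^ k < b ^ k)%R.
Proof.
move=> ha hab; elim: k => [|k IH] // _.
case: k IH => [|k] IH; first by rewrite /= !Rmult_1_r.
have := IH erefl => IH'.
change (a * a ^ k.+1 < b * b ^ k.+1)%R.
apply: Rmult_le_0_lt_compat => //; exact: pow_le.
Qed.

Lemma real_to_nat (D n m : nat) : (1 <= D)%N -> (1 <= n)%N ->
  (INR m < Rpower (INR n) (2 - 1 / INR D) / (1000 * INR D))%R ->
  ((1000 * D * m) ^ D < n ^ (2 * D - 1))%N.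
Proof.
move=> D1 n1 h.
have Dp : (0 < INR D)%R by apply: lt_0_INR; apply/ltP.
have np : (0 < INR n)%R by apply: lt_0_INR; apply/ltP.
set X := Rpower (INR n) (2 - 1 / INR D) in h.
have Xp : (0 < X)%R by rewrite /X /Rpower; apply: exp_pos.
have h2 : (INR (1000 * D * m) < X)%R.
  rewrite !INR_muln.
  have e : (INR 1000 = 1000)%R by rewrite INR_IZR_INZ; reflexivity.
  rewrite e.
  have := Rmult_lt_compat_l (1000 * INR D) _ _ ltac:(lra) h.
  have -> : (1000 * INR D * (X / (1000 * INR D)) = X)%R by field; lra.
  lra.
have h3 : (INR (1000 * D * m) ^ D < X ^ D)%R.
  by apply: pow_lt_R => //; apply: pos_INR.
have eX : (X ^ D = INR n ^ (2 * D - 1))%R.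
  rewrite -Rpower_pow // /X Rpower_mult -Rpower_pow //; congr Rpower.
  have e2 : (INR (2 * D - 1) + 1 = 2 * INR D)%R.
    rewrite -S_INR.
    have -> : (2 * D - 1).+1 = (2 * D)%N by clear -D1; lia.
    by rewrite INR_muln.
  field_simplify; [lra | lra].
rewrite eX -!INR_expn in h3.
by apply/ltP; apply: INR_lt.
Qed.

From mathcomp Require Import ring.

Lemma expn_mono (m n e : nat) : (m <= n)%N -> (m ^ e <= n ^ e)%N.
Proof. by case: e => [|e] h //; rewrite leq_exp2r. Qed.

Lemma ffact_ub (n m : nat) : (n ^_ m <= n ^ m)%N.
Proof.
rewrite ffact_prod (@leq_trans (\prod_(i < m) n)) //.
  by apply: leq_prod => i _; apply: leq_subr.
by rewrite prod_nat_const card_ord.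
Qed.

Lemma ffact_lb (n m : nat) : ((n - m) ^ m <= n ^_ m)%N.
Proof.
rewrite ffact_prod (@leq_trans (\prod_(i < m) (n - m))) //.
  by rewrite prod_nat_const card_ord.
apply: leq_prod => i _; apply: leq_sub2l; exact: ltnW.
Qed.

Lemma fact_ub (n : nat) : (n`! <= n ^ n)%N.
Proof. by rewrite -ffactnn ffact_ub. Qed.

Lemma bin_lb (D k x : nat) : (1 <= D)%N -> (k <= (D.+1) * x)%N ->
  (k ^ D <= (2 * D * D.+1) ^ D * 'C(x, minn D x))%N.
Proof.
move=> D1 hk.
case: (leqP (2 * D) x) => hx.
  have -> : minn D x = D by apply/minn_idPl; lia.
  apply: (@leq_trans ((D.+1 * x) ^ D)); first by rewrite leq_exp2r.
  apply: (@leq_trans ((D.+1 * (2 * (x - D))) ^ D)).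
    rewrite leq_exp2r // leq_mul2l; apply/orP; right; lia.
  rewrite mulnCA mulnA [2 * D * D.+1]mulnC -mulnA !expnMn -!mulnA.
  rewrite [X in (X <= _)%N]mulnCA leq_mul2l; apply/orP; right.
  rewrite leq_mul2l; apply/orP; right.
  apply: (@leq_trans (x ^_ D)); first exact: ffact_lb.
  rewrite -bin_ffact mulnC leq_mul2r; apply/orP; right; exact: fact_ub.
have hb : (0 < 'C(x, minn D x))%N by rewrite bin_gt0 geq_minr.
apply: (@leq_trans ((2 * D * D.+1) ^ D)); last by rewrite leq_pmulr.
rewrite leq_exp2r //; nia.
Qed.

Lemma sum_bin_ub (m K : nat) :
  (K`! * \sum_(i < K.+1) 'C(m, i) <= (m + K) ^ K)%N.
Proof.
rewrite addnC expnDn big_distrr /=.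
apply: leq_sum => i _.
have hi : (i <= K)%N by rewrite -ltnS.
rewrite -(bin_fact hi) -mulnA leq_mul2l; apply/orP; right.
rewrite [i`! * _]mulnC -mulnA [i`! * _]mulnC bin_ffact.
apply: leq_mul; last exact: ffact_ub.
apply: (@leq_trans ((K - i) ^ (K - i))); first exact: fact_ub.
by apply: expn_mono; rewrite leq_subr.
Qed.

Lemma final_arith (c D n m Fc : nat) : (648 * D.+1 <= c * D)%N -> (2 <= D)%N -> ((c * D ^ 2) ^ D < n)%N ->
  ((n.-1)`! ^ D <= Fc * (2 * D * D.+1) ^ (D * n.-1))%N ->
  (Fc <= n`! * \sum_(i < (D * n).+1) 'C(m, i))%N ->
  ((c * D * m) ^ D < n ^ (2 * D - 1))%N -> False.
Proof.
move=> hc D2 hn h1 h2 hm.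
set K := D * n. set Q := 2 * D * D.+1.
have n1 : (1 <= n)%N by apply: leq_trans hn.
have D1 : (1 <= D)%N by apply: leq_trans D2.
have a : ((n.-1)`! ^ D * K`! <= n`! * (m + K) ^ K * Q ^ (D * n))%N.
  apply: (@leq_trans (Fc * Q ^ (D * n.-1) * K`!)); first by rewrite leq_mul2r h1 orbT.
  apply: (@leq_trans (n`! * (\sum_(i < K.+1) 'C(m, i)) * Q ^ (D * n) * K`!)).
    rewrite leq_mul2r; apply/orP; right; apply: leq_mul => //.
    apply: leq_pexp2l; first by rewrite /Q; lia.
    rewrite leq_mul2l; apply/orP; right; exact: leq_pred.
  rewrite mulnAC leq_mul2r; apply/orP; right.
  by rewrite -mulnA leq_mul2l mulnC sum_bin_ub orbT.
have b : ((c * D * (m + K)) ^ D <= 2 ^ D.+1 * n ^ (2 * D - 1))%N.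
  have e1 : ((c * D * K) ^ D <= n ^ (2 * D - 1))%N.
    have -> : 2 * D - 1 = (D - 1) + D by clear -D2; lia.
    have -> : c * D * K = c * D ^ 2 * n by rewrite /K expnS expn1 -!mulnA.
    rewrite expnD expnMn leq_mul2r; apply/orP; right.
    apply: (@leq_trans n); first exact: ltnW.
    have hD : (1 <= D - 1)%N by rewrite subn_gt0.
    by apply: leq_trans (leq_pexp2l n1 hD); rewrite expn1.
  have e2 : ((m + K) ^ D <= 2 ^ D * (m ^ D + K ^ D))%N.
    case: (leqP m K) => hmK.
      apply: (@leq_trans ((2 * K) ^ D)); first by apply: expn_mono; clear -hmK; lia.
      rewrite expnMn leq_mul2l; apply/orP; right; exact: leq_addl.
    apply: (@leq_trans ((2 * m) ^ D)); first by apply: expn_mono; clear -hmK; lia.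
    rewrite expnMn leq_mul2l; apply/orP; right; exact: leq_addr.
  rewrite expnMn.
  apply: (@leq_trans ((c * D) ^ D * (2 ^ D * (m ^ D + K ^ D)))).
    by rewrite leq_mul2l e2 orbT.
  rewrite mulnCA mulnDr -!expnMn expnS -mulnA.
  apply: (@leq_trans (2 ^ D * (2 * n ^ (2 * D - 1)))); last by rewrite mulnA [2 ^ D * 2]mulnC.
  rewrite leq_mul2l; apply/orP; right.
  rewrite mul2n -addnn (mulnA c D m); apply: leq_add; [exact: ltnW | exact: e1].
clear h1 h2 hm.
have c1 : ((n.-1)`! ^ D * K`! * (c * D) ^ (D * n) <=
           n`! * Q ^ (D * n) * (2 ^ D.+1 * n ^ (2 * D - 1)) ^ n)%N.
  apply: (@leq_trans (n`! * (m + K) ^ K * Q ^ (D * n) * (c * D) ^ (D * n))).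
    by rewrite leq_mul2r a orbT.
  rewrite mulnAC -!mulnA leq_mul2l; apply/orP; right.
  rewrite mulnA mulnC leq_mul2l; apply/orP; right.
  have -> : (m + K) ^ K = ((m + K) ^ D) ^ n by rewrite -expnM.
  rewrite expnM -!expnMn; apply: expn_mono.
  by rewrite [(m + K) * _]mulnC.
have d1 : (n ^ (D * n) <= 3 ^ (D * n) * ((n.-1)`! ^ D * n ^ D))%N.
  rewrite mulnC expnM [3 ^ (n * D)]expnM -!expnMn.
  apply: expn_mono.
  apply: (leq_trans (fact_lb n)).
  have fn : n`! = n * (n.-1)`! by rewrite -{1}(prednK n1) factS prednK.
  by rewrite fn [n * _]mulnC.
have d2 : (K ^ K <= 3 ^ K * K`!)%N by apply: fact_lb.
have f : (n ^ (D * n) * K ^ K * (c * D) ^ (D * n) <=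
   n ^ D * (3 ^ D * 3 ^ D * n * Q ^ D * (2 ^ D.+1 * n ^ (2 * D - 1))) ^ n)%N.
  apply: (@leq_trans ((3 ^ (D * n) * ((n.-1)`! ^ D * n ^ D)) * (3 ^ K * K`!) * (c * D) ^ (D * n))).
    by rewrite leq_mul2r; apply/orP; right; apply: leq_mul.
  have -> : (3 ^ (D * n) * ((n.-1)`! ^ D * n ^ D)) * (3 ^ K * K`!) * (c * D) ^ (D * n)
     = 3 ^ (D * n) * 3 ^ K * n ^ D * ((n.-1)`! ^ D * K`! * (c * D) ^ (D * n)).
    by ring.
  apply: (@leq_trans (3 ^ (D * n) * 3 ^ K * n ^ D * (n ^ n * Q ^ (D * n) * (2 ^ D.+1 * n ^ (2 * D - 1)) ^ n))).
    rewrite leq_mul2l; apply/orP; right; apply: (leq_trans c1).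
    by rewrite -!mulnA leq_mul2r fact_ub orbT.
  rewrite mulnAC [_ * n ^ D]mulnC -!mulnA leq_mul2l; apply/orP; right.
  rewrite !expnMn !mulnA -!expnM.
  by [].
have eL : (n ^ (D * n) * K ^ K * (c * D) ^ (D * n) = (n ^ D * K ^ D * (c * D) ^ D) ^ n)%N.
  by rewrite !expnMn -!expnM.
rewrite eL in f.
set R0 := (3 ^ D * 3 ^ D * n * Q ^ D * (2 ^ D.+1 * n ^ (2 * D - 1)))%N in f.
set L0 := (n ^ D * K ^ D * (c * D) ^ D)%N in f.
have R0p : (0 < R0)%N.
  by rewrite /R0 !muln_gt0 !expn_gt0 n1 /Q !muln_gt0 D1.
have h9 : (3 ^ D * 3 ^ D * R0 <= L0)%N.
  have e2 : (2 ^ D.+1 <= 2 ^ D * 2 ^ D)%N.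
    by rewrite expnS leq_mul2r; apply/orP; right; rewrite -{1}(expn1 2) leq_pexp2l.
  have en : (n * n ^ (2 * D - 1) = (n * n) ^ D)%N.
    rewrite -expnS expnMn -expnD; congr (_ ^ _); clear -D1; lia.
  apply: (@leq_trans ((3 * 3 * 3 * 3 * Q * 2 * 2) ^ D * (n * n) ^ D)).
    apply: (@leq_trans (3 ^ D * 3 ^ D * (3 ^ D * 3 ^ D * Q ^ D * (2 ^ D * 2 ^ D) * (n * n ^ (2 * D - 1))))).
      rewrite /R0 leq_mul2l; apply/orP; right.
      apply: (@leq_trans (3 ^ D * 3 ^ D * Q ^ D * (2 ^ D.+1) * (n * n ^ (2 * D - 1)))).
        by rewrite leq_eqVlt; apply/orP; left; apply/eqP; ring.
      rewrite leq_mul2r; apply/orP; right; rewrite leq_mul2l e2 orbT //.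
    by rewrite en !expnMn leq_eqVlt; apply/orP; left; apply/eqP; ring.
  rewrite /L0 -!expnMn; apply: expn_mono.
  rewrite /Q /K.
  have : (648 * D.+1 * D <= c * D * D)%N by rewrite leq_mul2r hc orbT.
  clear -D1; nia.
have hn9 : (n ^ D < (3 ^ D * 3 ^ D) ^ n)%N.
  rewrite -expnMn -expnM mulnC expnM ltn_exp2r //.
  by apply: ltn_expl.
have : (n ^ D * R0 ^ n < L0 ^ n)%N.
  apply: (@leq_trans ((3 ^ D * 3 ^ D) ^ n * R0 ^ n)).
    by rewrite ltn_pmul2r // expn_gt0 R0p.
  by rewrite -expnMn; apply: expn_mono.
by rewrite ltnNge f.
Qed.

Definition back n (A : {ffun 'I_n -> {set 'I_n}}) (v : 'I_n) :=
  [set u in A v | (u < v)%N].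
Definition fwd n (A : {ffun 'I_n -> {set 'I_n}}) (v : 'I_n) :=
  [set u in A v | (v < u)%N].

Definition okk n (D k : nat) (A : {ffun 'I_n -> {set 'I_n}}) : bool :=
  [&& [forall v : 'I_n, v \notin A v],
      [forall u : 'I_n, forall v : 'I_n, (v \in A u) == (u \in A v)],
      [forall v : 'I_n, #|back A v| <= D],
      [forall v : 'I_n, #|fwd A v| <= D.+1],
      [forall v : 'I_n, (0 < v < k)%N ==> (0 < #|back A v|)%N] &
      [forall u : 'I_n, forall v : 'I_n, (v \in A u) ==> (v < k)%N]].

Definition Fk n D k := [set A : {ffun 'I_n -> {set 'I_n}} | okk D k A].

Lemma okk_irr n D k (A : {ffun 'I_n -> {set 'I_n}}) : okk D k A -> forall v, v \notin A v.
Proof. by case/and5P=> /forallP h _ _ _ _. Qed.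
Lemma okk_sym n D k (A : {ffun 'I_n -> {set 'I_n}}) : okk D k A ->
  forall u v, (v \in A u) = (u \in A v).
Proof. by case/and5P=> _ /forallP h _ _ _ u v; apply/eqP; move/forallP: (h u); apply. Qed.
Lemma okk_back n D k (A : {ffun 'I_n -> {set 'I_n}}) : okk D k A -> forall v, (#|back A v| <= D)%N.
Proof. by case/and5P=> _ _ /forallP h _ _. Qed.
Lemma okk_fwd n D k (A : {ffun 'I_n -> {set 'I_n}}) : okk D k A -> forall v, (#|fwd A v| <= D.+1)%N.
Proof. by case/and5P=> _ _ _ /forallP h _. Qed.
Lemma okk_nz n D k (A : {ffun 'I_n -> {set 'I_n}}) : okk D k A ->
  forall v : 'I_n, (0 < v < k)%N -> (0 < #|back A v|)%N.
Proof. by case/and5P=> _ _ _ _ /andP[/forallP h _] v; move/implyP: (h v). Qed.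
Lemma okk_lt n D k (A : {ffun 'I_n -> {set 'I_n}}) : okk D k A ->
  forall u v : 'I_n, v \in A u -> (v < k)%N.
Proof. by case/and5P=> _ _ _ _ /andP[_ /forallP h] u v; move/forallP: (h u) => /(_ v) /implyP. Qed.
Lemma okkI n D k (A : {ffun 'I_n -> {set 'I_n}}) :
  (forall v, v \notin A v) -> (forall u v, (v \in A u) = (u \in A v)) ->
  (forall v, #|back A v| <= D)%N -> (forall v, #|fwd A v| <= D.+1)%N ->
  (forall v : 'I_n, (0 < v < k)%N -> (0 < #|back A v|)%N) ->
  (forall u v : 'I_n, v \in A u -> (v < k)%N) -> okk D k A.
Proof.
move=> h1 h2 h3 h4 h5 h6; apply/and5P; split.
- by apply/forallP.
- by apply/forallP=> u; apply/forallP=> v; rewrite h2.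
- by apply/forallP.
- by apply/forallP.
- apply/andP; split; apply/forallP=> u; first by apply/implyP; apply: h5.
  by apply/forallP=> v; apply/implyP; apply: h6.
Qed.

Lemma sum_fwd_back n (A : {ffun 'I_n -> {set 'I_n}}) :
  (forall u v, (v \in A u) = (u \in A v)) ->
  \sum_u #|fwd A u| = \sum_v #|back A v|.
Proof.
move=> hs.
have e1 : forall u, #|fwd A u| = \sum_v ((v \in A u) && (u < v)%N : nat).
  by move=> u; rewrite -sum1_card big_mkcond /=; apply: eq_bigr => v _; rewrite inE.
have e2 : forall v, #|back A v| = \sum_u ((u \in A v) && (u < v)%N : nat).
  by move=> v; rewrite -sum1_card big_mkcond /=; apply: eq_bigr => u _; rewrite inE.
under eq_bigr do rewrite e1.
under [in RHS]eq_bigr do rewrite e2.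
rewrite exchange_big /=; apply: eq_bigr => v _; apply: eq_bigr => u _.
by rewrite hs.
Qed.

Definition avail n D k (A : {ffun 'I_n -> {set 'I_n}}) :=
  [set u : 'I_n | (u < k)%N && (#|fwd A u| <= D)%N].

Lemma card_lt_ord n k : (k <= n)%N -> (k <= #|[set u : 'I_n | (u < k)%N]|)%N.
Proof.
move=> hk.
have e : #|[set widen_ord hk i | i in 'I_k]| = k.
  by rewrite card_imset ?card_ord //; move=> i j /(congr1 val) /= /val_inj.
rewrite -[X in (X <= _)%N]e.
apply: subset_leq_card; apply/subsetP=> x /imsetP[i _ ->]; rewrite inE /=.
by case: i.
Qed.

Lemma avail_lb n D k (A : {ffun 'I_n -> {set 'I_n}}) :
  okk D k A -> (k <= n)%N -> (k <= D.+1 * #|avail D k A|)%N.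
Proof.
move=> hA hk.
set L := [set u : 'I_n | (u < k)%N].
have hL := card_lt_ord hk.
have hb : forall v, v \notin L -> back A v = set0.
  move=> v; rewrite inE => hv; apply/setP=> u; rewrite !inE.
  apply/negbTE; apply/negP=> /andP[hu _].
  by move: (okk_lt hA (u := u) (v := v)); rewrite -(okk_sym hA) => /(_ hu); rewrite (negbTE hv).
have sb : (\sum_v #|back A v| <= D * #|L|)%N.
  rewrite (bigID (fun v => v \in L)) /= [X in (_ + X)%N]big1; last first.
    by move=> v /hb ->; rewrite cards0.
  rewrite addn0 mulnC -sum_nat_const; apply: leq_sum => v _; exact: okk_back hA v.
set Sat := [set u : 'I_n | (u < k)%N && (D < #|fwd A u|)%N].
have ss : (D.+1 * #|Sat| <= \sum_u #|fwd A u|)%N.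
  rewrite (bigID (fun v => v \in Sat)) /=.
  apply: leq_trans (leq_addr _ _).
  rewrite mulnC -sum_nat_const; apply: leq_sum => v; rewrite inE => /andP[_ ->] //.
have part : (#|avail D k A| + #|Sat| = #|L|)%N.
  rewrite -(cardsID [set u : 'I_n | (#|fwd A u| <= D)%N] L).
  have e1 : avail D k A = L :&: [set u | (#|fwd A u| <= D)%N].
    by apply/setP=> u; rewrite !inE.
  have e2 : Sat = L :\: [set u | (#|fwd A u| <= D)%N].
    by apply/setP=> u; rewrite !inE -ltnNge andbC.
  by rewrite e1 e2.
rewrite (sum_fwd_back (okk_sym hA)) in ss.
have pD : (D * #|avail D k A| + D * #|Sat| = D * #|L|)%N by rewrite -mulnDr part.
move: hL sb ss part pD; rewrite !mulSn -/L; clearbody L Sat; clear; lia.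
Qed.

Definition ext n (k' : 'I_n) (A : {ffun 'I_n -> {set 'I_n}}) (S : {set 'I_n}) :
  {ffun 'I_n -> {set 'I_n}} :=
  [ffun v => if v == k' then S else if v \in S then k' |: A v else A v].

Lemma okk_empty n D k (A : {ffun 'I_n -> {set 'I_n}}) (k' : 'I_n) :
  okk D k A -> (k <= k')%N -> A k' = set0.
Proof.
move=> hA hk; apply/setP=> u; rewrite inE; apply/negbTE/negP => hu.
move: (okk_lt hA hu); rewrite -(okk_sym hA) in hu.
by move: (okk_lt hA hu); rewrite ltnNge hk.
Qed.

Lemma memB n D (k' : 'I_n) (A : {ffun 'I_n -> {set 'I_n}}) (S : {set 'I_n}) (u v : 'I_n) : okk D k' A -> S \subset avail D k' A ->
  (u \in ext k' A S v) = [|| (v == k') && (u \in S), (u == k') && (v \in S) | u \in A v].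
Proof.
move=> hA hS.
have kS : k' \notin S.
  by apply/negP=> /(subsetP hS); rewrite inE ltnn.
have Ak : A k' = set0 by apply: (okk_empty hA).
rewrite ffunE; case: (eqVneq v k') => [->|hv] /=.
  by rewrite Ak inE (negbTE kS) andbF !orbF.
by case: ifP => hvS; rewrite ?inE ?andbT ?andbF.
Qed.

Lemma ext_ok n D (k' : 'I_n) (A : {ffun 'I_n -> {set 'I_n}}) (S : {set 'I_n}) :
  (1 <= D)%N -> (1 <= k')%N -> okk D k' A -> S \subset avail D k' A ->
  #|S| = minn D #|avail D k' A| -> okk D k'.+1 (ext k' A S).
Proof.
move=> D1 k1 hA hS hc.
have kS : k' \notin S by apply/negP=> /(subsetP hS); rewrite inE ltnn.
have Sl : forall u, u \in S -> (u < k')%N.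
  by move=> u /(subsetP hS); rewrite inE => /andP[].
have Sf : forall u, u \in S -> (#|fwd A u| <= D)%N.
  by move=> u /(subsetP hS); rewrite inE => /andP[].
have mB := fun u v => memB u v hA hS.
have hlt := okk_lt hA.
apply: okkI.
- move=> v; rewrite mB (negbTE (okk_irr hA _)) orbF.
  by case: (eqVneq v k') => [->|] /=; rewrite ?(negbTE kS).
- move=> u v; rewrite !mB (okk_sym hA).
  by case: (v == k'); case: (u == k'); case: (u \in S); case: (v \in S); rewrite /= ?orbT ?orbF.
- move=> v; case: (eqVneq v k') => [->|hv].
    apply: (leq_trans _ (geq_minl D #|avail D k' A|)); rewrite -hc.
    apply: subset_leq_card; apply/subsetP=> u.
    rewrite inE mB eqxx (negbTE kS) andbF (okk_empty hA (leqnn _)) inE /= !orbF.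
    by case/andP.
  apply: leq_trans (okk_back hA v); apply: subset_leq_card; apply/subsetP=> u.
  rewrite !inE mB (negbTE hv) /= => /andP[/orP[/andP[/eqP -> /Sl hvk] | ->] huv] //.
  by move: (ltn_trans huv hvk); rewrite ltnn.
- move=> v; case: (eqVneq v k') => [->|hv].
    apply: (@leq_trans 0) => //; rewrite leqn0 cards_eq0; apply/eqP/setP=> u.
    rewrite !inE mB eqxx /=; apply/negbTE/negP => /andP[/orP[/Sl hu | /orP[/andP[_ hk]|/hlt hu]] hku].
    + by move: (ltn_trans hu hku); rewrite ltnn.
    + by rewrite hk in kS.
    + by move: (ltn_trans hu hku); rewrite ltnn.
  case: (boolP (v \in S)) => hvS.
    apply: (@leq_trans #|k' |: fwd A v|).
      apply: subset_leq_card; apply/subsetP=> u; rewrite !inE mB (negbTE hv) hvS /= andbT.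
      by case/andP=> /orP[->|->] // ->; rewrite orbT.
    by rewrite cardsU1 -add1n; apply: leq_add; [exact: leq_b1 | exact: Sf].
  apply: leq_trans (okk_fwd hA v); apply: subset_leq_card; apply/subsetP=> u.
  by rewrite !inE mB (negbTE hv) (negbTE hvS) /= andbF.
- move=> v /andP[v0]; rewrite ltnS leq_eqVlt => /orP[/eqP/val_inj ->|hvk].
    have av : (0 < #|avail D k' A|)%N.
      have := avail_lb hA (ltnW (ltn_ord k')); clear -k1; nia.
    rewrite (@leq_trans #|S|) //; first by rewrite hc leq_min D1 av.
    apply: subset_leq_card; apply/subsetP=> u hu; rewrite !inE mB eqxx hu /=.
    exact: Sl.
  have hb : (0 < #|back A v|)%N by apply: (okk_nz hA); rewrite v0 hvk.
  apply: leq_trans hb _.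
  apply: subset_leq_card; apply/subsetP=> u; rewrite !inE mB => /andP[-> ->].
  by rewrite !orbT.
- move=> u v; rewrite mB => /orP[/andP[_ /Sl /ltnW]|/orP[/andP[/eqP -> _]|/hlt /ltnW]] //.
Qed.

Lemma ext_inj n D (k' : 'I_n) (A1 A2 : {ffun 'I_n -> {set 'I_n}}) (S1 S2 : {set 'I_n}) :
  okk D k' A1 -> okk D k' A2 -> S1 \subset avail D k' A1 -> S2 \subset avail D k' A2 ->
  ext k' A1 S1 = ext k' A2 S2 -> A1 = A2 /\ S1 = S2.
Proof.
move=> h1 h2 hS1 hS2 he.
have eS : S1 = S2 by move/ffunP: he => /(_ k'); rewrite !ffunE eqxx.
split=> //; apply/ffunP=> v; apply/setP=> u.
case: (eqVneq v k') => [->|hv].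
  by rewrite (okk_empty h1 (leqnn _)) (okk_empty h2 (leqnn _)).
have e1 := memB u v h1 hS1; have e2 := memB u v h2 hS2.
rewrite he eS e2 (negbTE hv) /= in e1.
case: (eqVneq u k') => [eu|hu] /=.
  have n1 : k' \notin A1 v by apply/negP=> /(okk_lt h1); rewrite ltnn.
  have n2 : k' \notin A2 v by apply/negP=> /(okk_lt h2); rewrite ltnn.
  by rewrite eu (negbTE n1) (negbTE n2).
by move: e1; rewrite (negbTE hu) /= => ->.
Qed.

Lemma step_count n D k : (1 <= D)%N -> (1 <= k)%N -> (k < n)%N ->
  (#|Fk n D k| * k ^ D <= (2 * D * D.+1) ^ D * #|Fk n D k.+1|)%N.
Proof.
move=> D1 k1 kn.
pose k' := Ordinal kn.
pose P := [set p : {ffun 'I_n -> {set 'I_n}} * {set 'I_n} |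
   (p.1 \in Fk n D k) && ((p.2 \subset avail D k p.1) && (#|p.2| == minn D #|avail D k p.1|))].
have cP : #|P| = \sum_(A in Fk n D k) 'C(#|avail D k A|, minn D #|avail D k A|).
  rewrite -sum1_card.
  under eq_bigl do rewrite inE.
  rewrite -(pair_big_dep (fun A => A \in Fk n D k)
     (fun A (S : {set 'I_n}) => (S \subset avail D k A) && (#|S| == minn D #|avail D k A|)) (fun _ _ => 1%N)) /=.
  apply: eq_bigr => A _; rewrite sum1_card -cards_draws.
  by apply: eq_card => S; rewrite inE.
have iP : (#|P| <= #|Fk n D k.+1|)%N.
  rewrite -(card_in_imset (f := fun p => ext k' p.1 p.2)); last first.
    move=> [A1 S1] [A2 S2]; rewrite !inE /= => /andP[h1 /andP[s1 _]] /andP[h2 /andP[s2 _]] he.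
    by case: (@ext_inj n D k' A1 A2 S1 S2 h1 h2 s1 s2 he) => -> ->.
  apply: subset_leq_card; apply/subsetP=> B /imsetP[[A S]]; rewrite !inE /= => /andP[hA /andP[hS /eqP hc]] ->.
  by apply: (@ext_ok n D k' A S).
apply: (@leq_trans ((2 * D * D.+1) ^ D * #|P|)); last by rewrite leq_mul2l iP orbT.
rewrite cP big_distrr /= -sum_nat_const; apply: leq_sum => A hA.
apply: bin_lb => //.
rewrite inE in hA; exact: (avail_lb hA (ltnW kn)).
Qed.

Lemma count_lb n D : (1 <= D)%N -> forall j, (j < n)%N ->
  ((j`!) ^ D <= #|Fk n D j.+1| * (2 * D * D.+1) ^ (D * j))%N.
Proof.
move=> D1; elim=> [|j IH] jn.
  rewrite fact0 exp1n muln0 expn0 muln1 card_gt0; apply/set0Pn.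
  exists [ffun=> set0]; rewrite inE; apply: okkI.
  - by move=> v; rewrite ffunE inE.
  - by move=> u v; rewrite !ffunE !inE.
  - by move=> v; rewrite (@leq_trans 0) // leqn0 cards_eq0; apply/eqP/setP=> u; rewrite !inE ffunE inE.
  - by move=> v; rewrite (@leq_trans 0) // leqn0 cards_eq0; apply/eqP/setP=> u; rewrite !inE ffunE inE.
  - by move=> v /andP[h1 h2]; move: h2; rewrite ltnS leqn0 => /eqP h; rewrite h in h1.
  - by move=> u v; rewrite ffunE inE.
have IH' := IH (ltnW jn).
have st := step_count D1 (ltn0Sn j) jn.
rewrite factS expnMn.
apply: (@leq_trans (j.+1 ^ D * (#|Fk n D j.+1| * (2 * D * D.+1) ^ (D * j)))).
  by rewrite leq_mul2l IH' orbT.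
rewrite mulnA [j.+1 ^ D * _]mulnC.
apply: (@leq_trans ((2 * D * D.+1) ^ D * #|Fk n D j.+2| * (2 * D * D.+1) ^ (D * j))).
  by rewrite leq_mul2r st orbT.
by rewrite [_ ^ D * _]mulnC -mulnA -expnD [D * j.+1]mulnS.
Qed.

Definition relA n (A : {ffun 'I_n -> {set 'I_n}}) : rel 'I_n := fun x y => y \in A x.


Lemma relA_props n D (A : {ffun 'I_n -> {set 'I_n}}) : okk D n A ->
  [/\ simple_graph (relA A), degenerate (relA A) D & max_deg_le (relA A) (2 * D + 1)].
Proof.
move=> hA; split.
- split; [exact: okk_irr hA | by move=> x y; rewrite /relA (okk_sym hA)].
- move=> S /set0Pn [v0 hv0].
  pose v := [arg max_(v > v0 in S) (v : nat)].
  have [v1 hv1 hmax] : exists2 v1, v1 \in S & forall u, u \in S -> (u <= v1)%N.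
    by case: (@arg_maxnP _ v0 (mem S) (fun v : 'I_n => (v : nat)) hv0) => w hw hm; exists w.
  exists v1 => //.
  apply: leq_trans (okk_back hA v1); apply: subset_leq_card; apply/subsetP=> u.
  rewrite !inE /relA => /andP[hu huv]; rewrite huv /= ltn_neqAle hmax // andbT.
  apply/negP=> /eqP/val_inj eu; move: huv; rewrite eu; apply/negP; exact: okk_irr hA v1.
- move=> v.
  have -> : [set u | relA A v u] = back A v :|: fwd A v.
    apply/setP=> u; rewrite !inE /relA -andb_orr.
    case hu : (u \in A v) => //=.
    case: (ltngtP u v) => // /val_inj eu.
    by move: hu; rewrite eu (negbTE (okk_irr hA v)).
  apply: leq_trans (leq_card_setU _ _) _.
  by rewrite addn1 mul2n -addnn -addnS; apply: leq_add; [exact: okk_back hA v | exact: okk_fwd hA v].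
Qed.

Lemma set2_eq (T : finType) (a b c d : T) : [set a; b] = [set c; d] ->
  (a = c /\ b = d) \/ (a = d /\ b = c).
Proof.
move=> e.
have ha : a \in [set c; d] by rewrite -e set21.
have hb : b \in [set c; d] by rewrite -e set22.
have hc : c \in [set a; b] by rewrite e set21.
have hd : d \in [set a; b] by rewrite e set22.
case/set2P: ha; case/set2P: hb; case/set2P: hc; case/set2P: hd; move=> *; subst;
  first [by left; split | by right; split].
Qed.

Lemma ffact_mono a n : (a <= n)%N -> (a ^_ n <= n ^_ n)%N.
Proof.
move=> h; rewrite !ffact_prod; apply: leq_prod => i _; exact: leq_sub2r.
Qed.

Definition EG (T : finType) (g : rel T) :=
  [set E : {set T} | [exists x, exists y, (E == [set x; y]) && g x y]].

Lemma card_Es (T : finType) (S : {set T}) K :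
  #|[set E : {set T} | (E \subset S) && (#|E| <= K)%N]| = \sum_(i < K.+1) 'C(#|S|, i).
Proof.
rewrite -sum1_card (partition_big (fun E : {set T} => inord #|E| : 'I_K.+1) predT) //=.
apply: eq_bigr => i _; rewrite -cards_draws -sum1_card.
apply: eq_bigl => E; rewrite !inE.
case: (boolP (E \subset S)) => //= _.
apply/andP/eqP => [[hK /eqP <-]|hE]; first by rewrite inordK.
have hK : (#|E| <= K)%N by rewrite hE -ltnS.
split => //; apply/eqP/val_inj; rewrite /= inordK //.
Qed.


Definition pickf (T : finType) (g : rel T) n (t0 : T) (A : {ffun 'I_n -> {set 'I_n}}) :
  {ffun 'I_n -> T} :=
  odflt [ffun=> t0] [pick f : {ffun 'I_n -> T} |
     injectiveb f && [forall x, forall y, (y \in A x) ==> g (f x) (f y)]].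

Lemma pickf_spec (T : finType) (g : rel T) n (t0 : T) (A : {ffun 'I_n -> {set 'I_n}}) :
  (exists f : 'I_n -> T, injective f /\ forall x y, relA A x y -> g (f x) (f y)) ->
  injective (pickf g t0 A) /\ forall x y, y \in A x -> g (pickf g t0 A x) (pickf g t0 A y).
Proof.
move=> [f0 [i0 p0]]; rewrite /pickf; case: pickP => [f /andP[/injectiveP hi /forallP hp] | none] /=.
  split=> // x y hxy; move/forallP: (hp x) => /(_ y) /implyP; exact.
exfalso; move: (none (finfun f0)) => /negP; apply; apply/andP; split.
  by apply/injectiveP=> x y; rewrite !ffunE => /i0.
by apply/forallP=> x; apply/forallP=> y; apply/implyP=> h; rewrite !ffunE; apply: p0.
Qed.

Definition pairsA n (A : {ffun 'I_n -> {set 'I_n}}) :=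
  [set xy : 'I_n * 'I_n | (xy.2 \in A xy.1) && (xy.1 < xy.2)%N].

Definition EA (T : finType) n (f : {ffun 'I_n -> T}) (A : {ffun 'I_n -> {set 'I_n}}) :=
  [set [set f xy.1; f xy.2] | xy in pairsA A].

Lemma card_pairsA n D (A : {ffun 'I_n -> {set 'I_n}}) : okk D n A -> (#|pairsA A| <= D * n)%N.
Proof.
move=> hA.
have -> : #|pairsA A| = \sum_u #|fwd A u|.
  rewrite -sum1_card.
  under eq_bigl do rewrite inE.
  rewrite -(pair_big_dep predT (fun (x y : 'I_n) => (y \in A x) && (x < y)%N) (fun _ _ => 1%N)) /=.
  apply: eq_bigr => u _; rewrite sum1_card; apply: eq_card => v; rewrite !inE.
  by [].
rewrite (sum_fwd_back (okk_sym hA)).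
apply: (@leq_trans (\sum_(v : 'I_n) D)); first by apply: leq_sum => v _; exact: okk_back hA v.
by rewrite sum_nat_const card_ord mulnC.
Qed.

Lemma encode (T : finType) (g : rel T) n D (t0 : T) :
  (1 < n)%N ->
  (forall A, A \in Fk n D n ->
     exists f : 'I_n -> T, injective f /\ forall x y, relA A x y -> g (f x) (f y)) ->
  (#|Fk n D n| <= n`! * \sum_(i < (D * n).+1) 'C(#|EG g|, i))%N.
Proof.
move=> n2 H.
pose fA (A : {ffun 'I_n -> {set 'I_n}}) := @pickf T g n t0 A.
have spec : forall A, A \in Fk n D n -> injective (fA A) /\
    forall x y, y \in A x -> g (fA A x) (fA A y).
  by move=> A hA; apply: pickf_spec; apply: H.
have rec : forall A, A \in Fk n D n -> forall x y,
    (y \in A x) = ([set fA A x; fA A y] \in EA (fA A) A).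
  move=> A hA x y; have [fi _] := spec A hA; rewrite inE in hA.
  apply/idP/idP.
    move=> hxy; case: (ltngtP x y) => hl.
    - by apply/imsetP; exists (x, y) => //; rewrite inE hxy hl.
    - apply/imsetP; exists (y, x); last by rewrite setUC.
      by rewrite inE /= (okk_sym hA) hxy hl.
    - by move: hxy; rewrite (val_inj hl) (negbTE (okk_irr hA y)).
  case/imsetP=> [[a b]]; rewrite inE /= => /andP[hab _] /set2_eq [[/fi -> /fi ->]|[/fi -> /fi ->]] //.
  by rewrite (okk_sym hA).
have cov1 : forall A, A \in Fk n D n -> forall x, fA A x \in cover (EA (fA A) A).
  move=> A hA x; have hA' := hA; rewrite inE in hA'.
  have [y hy] : exists y, y \in A x.
    case: (posnP x) => hx.
      have h1 : (0 < 1 < n)%N by rewrite n2.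
      have := okk_nz hA' (v := Ordinal n2) h1.
      case/card_gt0P => u; rewrite inE => /andP[hu hu1].
      exists (Ordinal n2); rewrite (okk_sym hA').
      have -> : x = u by apply/val_inj; move: hu1; rewrite /= ltnS leqn0 hx => /eqP ->.
      exact: hu.
    have := okk_nz hA' (v := x); rewrite hx ltn_ord => /(_ erefl).
    by case/card_gt0P => u; rewrite inE => /andP[hu _]; exists u.
  apply/bigcupP; exists [set fA A x; fA A y]; last exact: set21.
  by rewrite -rec.
have cov2 : forall A, A \in Fk n D n -> (#|cover (EA (fA A) A)| <= n)%N.
  move=> A hA; apply: (@leq_trans #|[set fA A x | x in 'I_n]|); last first.
    by apply: leq_trans (leq_imset_card _ _) _; rewrite card_ord.
  apply: subset_leq_card; apply/subsetP=> z /bigcupP [E /imsetP [[a b] _ ->]].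
  by case/set2P=> ->; apply: imset_f.
pose Cset := [set p : {set {set T}} * {ffun 'I_n -> T} |
  ((p.1 \subset EG g) && (#|p.1| <= D * n)%N) &&
  ((#|cover p.1| <= n)%N && (injectiveb p.2 && (p.2 \in ffun_on (mem (cover p.1)))))].
have s1 : (#|Fk n D n| <= #|Cset|)%N.
  rewrite -(card_in_imset (f := fun A => (EA (fA A) A, fA A))); last first.
    move=> A1 A2 h1 h2 [e1 e2]; apply/ffunP=> x; apply/setP=> y.
    by rewrite (rec A1 h1) (rec A2 h2) e1 e2.
  apply: subset_leq_card; apply/subsetP=> p /imsetP [A hA ->]; rewrite inE /=.
  have [fi fp] := spec A hA; have hA' := hA; rewrite inE in hA'.
  apply/andP; split; [apply/andP; split | apply/andP; split].
  - apply/subsetP=> E /imsetP [[a b]]; rewrite inE /= => /andP[hab _] ->.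
    by rewrite inE; apply/existsP; exists (fA A a); apply/existsP; exists (fA A b); rewrite eqxx fp.
  - apply: leq_trans (leq_imset_card _ _) _; exact: card_pairsA hA'.
  - exact: cov2.
  - apply/andP; split; first by apply/injectiveP.
    by apply/ffun_onP=> x; apply: cov1.
apply: (leq_trans s1).
rewrite -sum1_card.
under eq_bigl do rewrite inE.
rewrite -(pair_big_dep (fun E : {set {set T}} => (E \subset EG g) && (#|E| <= D * n)%N)
   (fun (E : {set {set T}}) (f : {ffun 'I_n -> T}) => (#|cover E| <= n)%N && (injectiveb f && (f \in ffun_on (mem (cover E)))))
   (fun _ _ => 1%N)) /=.
have inner : forall E : {set {set T}}, (\sum_(f : {ffun 'I_n -> T} | [&& #|cover E| <= n,
     injectiveb f & f \in ffun_on (mem (cover E))]) 1 <= n`!)%N.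
  move=> E.
  case: (boolP (#|cover E| <= n)%N) => hc /=; last by rewrite big_pred0.
  rewrite sum1_card.
  apply: (@leq_trans #|[set f in ffun_on (mem (cover E)) | injectiveb f]|).
    by apply: subset_leq_card; apply/subsetP=> f; rewrite !inE andbC.
  rewrite card_inj_ffuns_on card_ord -ffactnn; exact: ffact_mono.
apply: leq_trans; first (apply: leq_sum => E _; exact: inner E).
rewrite /=.
have -> : (\sum_(E : {set {set T}} | (E \subset EG g) && (#|E| <= D * n)%N) n`! =
   #|[set E : {set {set T}} | (E \subset EG g) && (#|E| <= D * n)%N]| * n`!)%N.
  by rewrite -sum_nat_const; apply: eq_bigl => E; rewrite inE.
by rewrite card_Es mulnC.
Qed.


Lemma has_nbr n D (A : {ffun 'I_n -> {set 'I_n}}) : okk D n A -> (1 < n)%N ->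
  forall x, exists y, y \in A x.
Proof.
move=> hA' n2 x.
case: (posnP x) => hx.
  have h1 : (0 < 1 < n)%N by rewrite n2.
  have := okk_nz hA' (v := Ordinal n2) h1.
  case/card_gt0P => u; rewrite inE => /andP[hu hu1].
  exists (Ordinal n2); rewrite (okk_sym hA').
  have -> : x = u by apply/val_inj; move: hu1; rewrite /= ltnS leqn0 hx => /eqP ->.
  exact: hu.
have := okk_nz hA' (v := x); rewrite hx ltn_ord => /(_ erefl).
by case/card_gt0P => u; rewrite inE => /andP[hu _]; exists u.
Qed.

Lemma edges_lb (T : finType) (g : rel T) n D (A : {ffun 'I_n -> {set 'I_n}}) (f : 'I_n -> T) :
  okk D n A -> (1 < n)%N -> injective f -> (forall x y, y \in A x -> g (f x) (f y)) ->
  (n <= 2 * #|EG g|)%N.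
Proof.
move=> hA n2 fi fp.
pose E := [set [set f xy.1; f xy.2] | xy in pairsA A].
have cv : forall x, f x \in cover E.
  move=> x; have [y hy] := has_nbr hA n2 x.
  apply/bigcupP; case: (ltngtP x y) => hl.
  - exists [set f x; f y]; last exact: set21.
    by apply/imsetP; exists (x, y) => //; rewrite inE hy hl.
  - exists [set f y; f x]; last exact: set22.
    by apply/imsetP; exists (y, x) => //; rewrite inE /= (okk_sym hA) hy hl.
  - by move: hy; rewrite (val_inj hl) (negbTE (okk_irr hA y)).
have h1 : (n <= #|cover E|)%N.
  rewrite -[X in (X <= _)%N]card_ord -(card_imset _ fi).
  by apply: subset_leq_card; apply/subsetP=> z /imsetP[x _ ->]; apply: cv.
apply: (leq_trans h1); apply: leq_trans (leq_card_cover E).1 _.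
apply: (@leq_trans (\sum_(B in E) 2)).
  apply: leq_sum => B /imsetP[xy _ ->]; rewrite cards2; by case: (_ != _).
rewrite sum_nat_const mulnC leq_mul2l; apply/orP; right.
apply: subset_leq_card; apply/subsetP=> B /imsetP[[a b]]; rewrite inE /= => /andP[hab _] ->.
by rewrite inE; apply/existsP; exists (f a); apply/existsP; exists (f b); rewrite eqxx fp.
Qed.

Theorem theorem1p2 :
  forall D : nat, (1 <= D)%N ->
  exists n0 : nat, forall n : nat, (n0 <= n)%N ->
  forall (T : finType) (g : rel T), simple_graph g ->
  (forall h : rel 'I_n, simple_graph h -> degenerate h D ->
     max_deg_le h (2 * D + 1) -> contains_subgraph g h) ->
  (INR (num_edges g) >=
     Rpower (INR n) (2 - 1 / INR D) / (1000 * INR D))%R.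
Proof.
move=> D D1.
exists ((1000 * D ^ 2) ^ D).+1 => n hn T g hg U.
have c0 : (0 < 1000 * D ^ 2)%N by rewrite muln_gt0 expn_gt0 D1.
have c1 : (1 < n)%N.
  apply: leq_trans hn; rewrite ltnS; by rewrite expn_gt0 c0.
have n1 : (1 <= n)%N by apply: ltnW.
have H : forall A, A \in Fk n D n ->
    exists f : 'I_n -> T, injective f /\ forall x y, relA A x y -> g (f x) (f y).
  move=> A; rewrite inE => hA; have [p1 p2 p3] := relA_props hA.
  exact: U _ p1 p2 p3.
have nn : (n.-1 < n)%N by rewrite ltn_predL.
have cl := @count_lb n D D1 n.-1 nn.
rewrite prednK // in cl.
have Fpos : (0 < #|Fk n D n|)%N.
  move: cl; case: #|Fk n D n| => //; rewrite mul0n leqn0 expn_eq0 => /andP[].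
  by rewrite eqn0Ngt fact_gt0.
case/card_gt0P: Fpos => A0 hA0.
have [f0 [fi0 fp0]] := H A0 hA0.
set t0 := f0 (Ordinal c1).
have enc := @encode T g n D t0 c1 H.
have me : num_edges g = #|EG g| by [].
case: (Rlt_or_le (INR (num_edges g)) (Rpower (INR n) (2 - 1 / INR D) / (1000 * INR D))) => hlt;
  last by apply: Rle_ge.
exfalso.
have hm := real_to_nat D1 n1 hlt.
rewrite me in hm.
case: (ltngtP D 1) => hD.
- by move: hD; rewrite ltnNge D1.
- apply: (@final_arith 1000 D n #|EG g| #|Fk n D n|) => //.
  + clear -hD; lia.
- rewrite hD in hm; move: hm; rewrite muln1 expn1 [(2 * 1 - 1)%N]/=  expn1.
  rewrite inE in hA0.
  have := @edges_lb T g n D A0 f0 hA0 c1 fi0 fp0.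
  move=> h1 h2; move: (leq_trans h2 h1); clear; lia.
Qed.
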